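(* Let $G=(X,b,m,c)$ be a weighted graph with $c=0$, let $p\in(1,\infty)$, let $W\subseteq X$ be finite and $\psi,\theta\colon X\to\mathbb{R}$. Let $u$ be a solution to the obstacle problem in $K_{\psi,\theta}(W)$. If $v\in F^p(\overline W)$ (respectively $v\in D^p(\overline W)$) satisfies $\Delta_pv\ge0$ on $W$ and $u\wedge v\in K_{\psi,\theta}(W)$, then $v\ge u$ on $W$.
   Context: Weighted graph $G=(X,b,m,c)$: $X$ countably infinite; $b$ symmetric, nonnegative, zero on the diagonal, $\sum_yb(x,y)<\infty$; $m>0$; $c\ge0$; $x\sim y$ iff $b(x,y)>0$; $X$ connected. $\partial_eW=\{y\in X\setminus W:y\sim z\text{ for some }z\in W\}$, $\overline W=W\cup\partial_eW$. $a^{\langle p-1\rangle}=|a|^{p-2}a$. $F^p(U)=\{f\colon X\to\mathbb{R}:\sum_yb(x,y)|f(x)-f(y)|^{p-1}<\infty\ \forall x\in U\}$; $\Delta_pf(x)=\frac1{m(x)}\sum_{y\in X}b(x,y)(f(x)-f(y))^{\langle p-1\rangle}$. $\mathcal{E}_{p,U}(u,w)=\frac12\sum_{x,y\in U}b(x,y)(u(x)-u(y))^{\langle p-1\rangle}(w(x)-w(y))$. $D^p(\overline W)=\{v:\sum_{x,y\in\overline W}b(x,y)|v(x)-v(y)|^p<\infty\}$. $K_{\psi,\theta}(W)=\{v\in D^p(\overline W):v\ge\psi\text{ on }W,\ v=\theta\text{ on }\partial_eW\}$. A solution to the obstacle problem in $K_{\psi,\theta}(W)$ is $u\in K_{\psi,\theta}(W)$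 with $\mathcal{E}_{p,\overline W}(u,v-u)\ge0$ for all $v\in K_{\psi,\theta}(W)$. $u\wedge v$ is the pointwise minimum. *)

(* Defs.v *)
From HB Require Import structures.
From mathcomp Require Import all_boot all_order all_algebra.
From mathcomp Require Import all_classical all_reals all_analysis.
Set Implicit Arguments. Unset Strict Implicit. Unset Printing Implicit Defensive.
Import Order.TTheory GRing.Theory Num.Theory.
Import numFieldNormedType.Exports.
Local Open Scope classical_set_scope.
Local Open Scope ring_scope.

Section Defs.
Context {R : realType} {X : choiceType}.

(* Signed sum of a real family over a set: (sum of positive parts) minus
   (sum of negative parts); it is the usual sum whenever the family is
   absolutely summable, which is the case everywhere it is used. *)
Definition rsum {T : choiceType} (D : set T) (f : T -> R) : R :=
  fine (\esum_(x in D) (Num.max (f x) 0)%:E)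
  - fine (\esum_(x in D) (Num.max (- f x) 0)%:E).

Definition connected_graph (b : X -> X -> R) : Prop :=
  forall x y : X, exists (n : nat) (s : nat -> X),
    s 0%N = x /\ s n = y /\ (forall i, (i < n)%N -> 0 < b (s i) (s i.+1)).

Definition weighted_graph (b : X -> X -> R) (m c : X -> R) : Prop :=
  countable [set: X] /\ infinite_set [set: X] /\
  (forall x y, b x y = b y x) /\ (forall x y, 0 <= b x y) /\
  (forall x, b x x = 0) /\
  (forall x, (\esum_(y in [set: X]) (b x y)%:E < +oo)%E) /\
  (forall x, 0 < m x) /\ (forall x, 0 <= c x) /\ connected_graph b.

Definition ext_boundary (b : X -> X -> R) (W : set X) : set X :=
  [set y | ~ W y /\ exists z, W z /\ 0 < b y z].

Definition closureW (b : X -> X -> R) (W : set X) : set X :=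
  W `|` ext_boundary b W.

Definition spow (p a : R) : R := (`|a| `^ (p - 2)) * a.

Definition Fp (b : X -> X -> R) (p : R) (U : set X) (f : X -> R) : Prop :=
  forall x, U x ->
    (\esum_(y in [set: X]) (b x y * `|f x - f y| `^ (p - 1))%:E < +oo)%E.

Definition Delta_p (b : X -> X -> R) (m : X -> R) (p : R) (f : X -> R)
  (x : X) : R :=
  (m x)^-1 * rsum [set: X] (fun y => b x y * spow p (f x - f y)).

Definition energy (b : X -> X -> R) (p : R) (U : set X) (u w : X -> R) : R :=
  2^-1 * rsum (U `*` U)
    (fun z : X * X => b z.1 z.2 * spow p (u z.1 - u z.2) * (w z.1 - w z.2)).

Definition Dp (b : X -> X -> R) (p : R) (U : set X) (v : X -> R) : Prop :=
  (\esum_(z in U `*` U) (b z.1 z.2 * `|v z.1 - v z.2| `^ p)%:E < +oo)%E.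

Definition Kset (b : X -> X -> R) (p : R) (psi theta : X -> R) (W : set X)
  (v : X -> R) : Prop :=
  [/\ Dp b p (closureW b W) v,
      (forall x, W x -> psi x <= v x) &
      (forall x, ext_boundary b W x -> v x = theta x)].

Definition obstacle_solution (b : X -> X -> R) (p : R) (psi theta : X -> R)
  (W : set X) (u : X -> R) : Prop :=
  Kset b p psi theta W u /\
  forall v, Kset b p psi theta W v ->
    0 <= energy b p (closureW b W) u (fun x => v x - u x).

End Defs.

(* Main.v *)
Require Import Defs.
From HB Require Import structures.
From mathcomp Require Import all_boot all_order all_algebra.
From mathcomp Require Import all_classical all_reals all_analysis.
From mathcomp Require Import lra ring.
Import Order.TTheory GRing.Theory Num.Theory.
Local Open Scope classical_set_scope.
Local Open Scope ring_scope.

Section Tool.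
Context {R : realType} {T : choiceType}.
Implicit Types (D : set T) (g h : T -> R).
Local Set Implicit Arguments.
Local Unset Strict Implicit.

Definition sm D g := (\esum_(x in D) (`|g x|)%:E < +oo)%E.

Lemma esum_fin D (a : T -> R) : (forall x, D x -> 0 <= a x) ->
  (\esum_(x in D) (a x)%:E < +oo)%E ->
  \esum_(x in D) (a x)%:E = (fine (\esum_(x in D) (a x)%:E))%:E.
Proof.
move=> a0 lt; rewrite fineK // ge0_fin_numE // esum_ge0 // => x Dx.
Qed.

Lemma esum_le_fin D (a c : T -> R) : (forall x, D x -> 0 <= a x <= c x) ->
  (\esum_(x in D) (c x)%:E < +oo)%E -> (\esum_(x in D) (a x)%:E < +oo)%E.
Proof.
move=> ac; apply: le_lt_trans; apply: le_esum => x Dx.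
by rewrite lee_fin; case/andP: (ac x Dx).
Qed.

Lemma maxpn (t : R) : Num.max t 0 - Num.max (- t) 0 = t.
Proof.
rewrite /Num.max; case: (ltP t 0) => h1; case: (ltP (- t) 0) => h2; lra.
Qed.

Lemma maxp_ge0 (t : R) : 0 <= Num.max t 0.
Proof. by rewrite le_max lexx orbT. Qed.

Lemma rsum_dec D g (Pf Nf : T -> R) : (forall x, D x -> 0 <= Pf x) ->
  (forall x, D x -> 0 <= Nf x) ->
  (forall x, D x -> g x = Pf x - Nf x) ->
  (\esum_(x in D) (Pf x)%:E < +oo)%E -> (\esum_(x in D) (Nf x)%:E < +oo)%E ->
  rsum D g = fine (\esum_(x in D) (Pf x)%:E) - fine (\esum_(x in D) (Nf x)%:E).
Proof.
move=> P0 N0 gE Pfin Nfin.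
have gp x : D x -> 0 <= Num.max (g x) 0 <= Pf x.
  move=> Dx; rewrite maxp_ge0 /= gE // ge_max P0 // andbT.
  by rewrite lerBlDr lerDl N0.
have gn x : D x -> 0 <= Num.max (- g x) 0 <= Nf x.
  move=> Dx; rewrite maxp_ge0 /= gE // ge_max N0 // andbT opprB.
  by rewrite lerBlDr lerDl P0.
have gpf := @esum_le_fin D _ _ gp Pfin.
have gnf := @esum_le_fin D _ _ gn Nfin.
have E : (\esum_(x in D) ((Num.max (g x) 0)%:E + (Nf x)%:E) =
          \esum_(x in D) ((Num.max (- g x) 0)%:E + (Pf x)%:E))%E.
  apply: eq_esum => x Dx; rewrite -!EFinD; congr EFin.
  have := maxpn (g x); rewrite gE //; lra.
rewrite !esumD in E; try by move=> x Dx; rewrite lee_fin ?maxp_ge0 ?P0 ?N0.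
have h1 := @esum_fin D _ (fun x Dx => maxp_ge0 (g x)) gpf.
have h2 := @esum_fin D _ (fun x Dx => maxp_ge0 (- g x)) gnf.
have h3 := @esum_fin D _ P0 Pfin.
have h4 := @esum_fin D _ N0 Nfin.
rewrite [X in (X + _)%E = _]h1 [X in (_ + X)%E = _]h4 in E.
rewrite [X in _ = (X + _)%E]h2 [X in _ = (_ + X)%E]h3 in E.
rewrite -!EFinD in E; have E' := EFin_inj E.
rewrite /rsum; lra.
Qed.

Lemma rsum_eq D g h : (forall x, D x -> g x = h x) -> rsum D g = rsum D h.
Proof.
move=> gh; rewrite /rsum; congr (fine _ - fine _); apply: eq_esum => x Dx;
  by rewrite gh.
Qed.

Lemma sm_bound D g (c : T -> R) : (forall x, D x -> `|g x| <= c x) ->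
  (\esum_(x in D) (c x)%:E < +oo)%E -> sm D g.
Proof.
by move=> gc; apply: esum_le_fin => x Dx; rewrite normr_ge0 gc.
Qed.

Lemma sm_eq D g h : (forall x, D x -> g x = h x) -> sm D g -> sm D h.
Proof.
by move=> gh; apply: sm_bound => x Dx; rewrite gh.
Qed.

Lemma smD D g h : sm D g -> sm D h -> sm D (fun x => g x + h x).
Proof.
move=> sg sh; apply: (@sm_bound _ _ (fun x => `|g x| + `|h x|)).
  by move=> x _; exact: ler_normD.
under eq_esum do rewrite EFinD.
by rewrite esumD ?lte_add_pinfty // => x _; rewrite lee_fin.
Qed.

Lemma smN D g : sm D g -> sm D (fun x => - g x).
Proof. by apply: sm_bound => x Dx; rewrite normrN. Qed.

Lemma smB D g h : sm D g -> sm D h -> sm D (fun x => g x - h x).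
Proof. by move=> sg sh; apply: smD => //; exact: smN. Qed.

Lemma sm_pos D g : sm D g -> (\esum_(x in D) (Num.max (g x) 0)%:E < +oo)%E.
Proof.
apply: esum_le_fin => x Dx; rewrite maxp_ge0 /= ge_max normr_ge0 andbT.
exact: ler_norm.
Qed.

Lemma sm_neg D g : sm D g -> (\esum_(x in D) (Num.max (- g x) 0)%:E < +oo)%E.
Proof.
move=> /smN; exact: sm_pos.
Qed.

Lemma fine_esumD D (a c : T -> R) : (forall x, D x -> 0 <= a x) ->
  (forall x, D x -> 0 <= c x) ->
  (\esum_(x in D) (a x)%:E < +oo)%E -> (\esum_(x in D) (c x)%:E < +oo)%E ->
  fine (\esum_(x in D) (a x + c x)%:E) =
  fine (\esum_(x in D) (a x)%:E) + fine (\esum_(x in D) (c x)%:E).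
Proof.
move=> a0 c0 af cf; under eq_esum do rewrite EFinD.
rewrite esumD; try by move=> x Dx; rewrite lee_fin ?a0 ?c0.
by rewrite (@esum_fin D _ a0 af) (@esum_fin D _ c0 cf) -EFinD /=.
Qed.

Lemma rsumD D g h : sm D g -> sm D h ->
  rsum D (fun x => g x + h x) = rsum D g + rsum D h.
Proof.
move=> sg sh.
have m0 (k : T -> R) : forall x, D x -> 0 <= Num.max (k x) 0.
  by move=> x _; exact: maxp_ge0.
have m0' (k : T -> R) : forall x, D x -> 0 <= Num.max (- k x) 0.
  by move=> x _; exact: maxp_ge0.
rewrite (@rsum_dec D _ (fun x => Num.max (g x) 0 + Num.max (h x) 0)
   (fun x => Num.max (- g x) 0 + Num.max (- h x) 0)).
- rewrite (fine_esumD (m0 g) (m0 h) (sm_pos sg) (sm_pos sh)).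
  rewrite (fine_esumD (m0' g) (m0' h) (sm_neg sg) (sm_neg sh)).
  rewrite /rsum; lra.
- by move=> x _; rewrite addr_ge0 ?maxp_ge0.
- by move=> x _; rewrite addr_ge0 ?maxp_ge0.
- by move=> x _; have := maxpn (g x); have := maxpn (h x); lra.
- under eq_esum do rewrite EFinD.
  by rewrite esumD ?lte_add_pinfty ?sm_pos // => x _; rewrite lee_fin maxp_ge0.
- under eq_esum do rewrite EFinD.
  by rewrite esumD ?lte_add_pinfty ?sm_neg // => x _; rewrite lee_fin maxp_ge0.
Qed.

Lemma rsumN D g : rsum D (fun x => - g x) = - rsum D g.
Proof.
rewrite /rsum; under [X in _ - fine X = _]eq_esum do rewrite opprK; lra.
Qed.

Lemma rsumB D g h : sm D g -> sm D h ->
  rsum D (fun x => g x - h x) = rsum D g - rsum D h.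
Proof. by move=> sg sh; rewrite rsumD ?rsumN //; exact: smN. Qed.

Lemma rsum_ge0E D g : (forall x, D x -> 0 <= g x) ->
  rsum D g = fine (\esum_(x in D) (g x)%:E).
Proof.
move=> g0; rewrite /rsum [X in _ - fine X]esum1 ?subr0; last first.
  move=> x Dx; congr EFin; apply/max_idPr; rewrite oppr_le0; exact: g0.
by congr fine; apply: eq_esum => x Dx; congr EFin; apply/max_idPl; exact: g0.
Qed.

Lemma rsum_ge0 D g : (forall x, D x -> 0 <= g x) -> 0 <= rsum D g.
Proof.
by move=> g0; rewrite rsum_ge0E // fine_ge0 // esum_ge0 // => x Dx; rewrite lee_fin g0.
Qed.

Lemma rsum_zero D g : sm D g -> (forall x, D x -> 0 <= g x) -> rsum D g <= 0 ->
  forall x, D x -> g x = 0.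
Proof.
move=> sg g0; rewrite rsum_ge0E // => le0 x Dx.
have gf : (\esum_(x in D) (g x)%:E < +oo)%E.
  by apply: esum_le_fin sg => y Dy; rewrite g0 //= ler_norm.
have ge : ((g x)%:E <= \esum_(x in D) (g x)%:E)%E.
  apply: esum_ge; exists [set x].
    by split; [exact: finite_set1| move=> y ->].
  by rewrite fsbig_set1.
move: ge; rewrite (@esum_fin D _ g0 gf) lee_fin => ge.
by apply/eqP; rewrite eq_le g0 // andbT (le_trans ge).
Qed.

Lemma esumZ D (k : R) (a : T -> \bar R) : 0 < k -> (forall x, (0 <= a x)%E) ->
  (\esum_(x in D) (k%:E * a x) = k%:E * \esum_(x in D) a x)%E.
Proof.
move=> k0 a0; rewrite /esum -ereal_sup_pZl //; congr ereal_sup.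
rewrite image_comp; apply: eq_imagel => A _ /=.
by rewrite ge0_mule_fsumr.
Qed.

Lemma esumZr D (k : R) (a : T -> R) : 0 <= k -> (forall x, 0 <= a x) ->
  (\esum_(x in D) (a x * k)%:E = (\esum_(x in D) (a x)%:E) * k%:E)%E.
Proof.
move=> k0 a0; have [->|kp] := eqVneq k 0.
  rewrite esum1; last by move=> x _; rewrite mulr0.
  by rewrite mule0.
have kp' : 0 < k by rewrite lt0r kp.
rewrite muleC -esumZ; last by move=> x; rewrite lee_fin.
  by apply: eq_esum => x _; rewrite EFinM muleC.
done.
Qed.

Lemma smZr D g (k : R) : 0 <= k -> sm D g -> sm D (fun x => g x * k).
Proof.
move=> k0 sg; apply: (@sm_bound D _ (fun x => `|g x| * k)).
  by move=> x _; rewrite normrM (ger0_norm k0).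
rewrite esumZr //.
have := @esum_fin D (fun x => `|g x|) (fun x _ => normr_ge0 _) sg; rewrite /= => ->.
by rewrite -EFinM ltry.
Qed.

Lemma rsumZr D g (k : R) : 0 <= k -> sm D g ->
  rsum D (fun x => g x * k) = rsum D g * k.
Proof.
move=> k0 sg.
have F (a : T -> R) : (forall x, 0 <= a x) -> (\esum_(x in D) (a x)%:E < +oo)%E ->
    ((\esum_(x in D) (a x * k)%:E < +oo)%E) /\
    (fine (\esum_(x in D) (a x * k)%:E) = fine (\esum_(x in D) (a x)%:E) * k).
  move=> a0 af; rewrite esumZr //.
  have := @esum_fin D a (fun x _ => a0 x) af => ->.
  by rewrite -EFinM ltry.
have [F1 F2] := F _ (fun x => maxp_ge0 (g x)) (sm_pos sg).
have [F3 F4] := F _ (fun x => maxp_ge0 (- g x)) (sm_neg sg).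
rewrite (@rsum_dec D _ (fun x => Num.max (g x) 0 * k)
   (fun x => Num.max (- g x) 0 * k)) //.
- by rewrite F2 F4 /rsum mulrBl.
- by move=> x _; rewrite mulr_ge0 ?maxp_ge0.
- by move=> x _; rewrite mulr_ge0 ?maxp_ge0.
- by move=> x _; rewrite -mulrBl maxpn.
Qed.

Lemma esum_le_sub D D' (a : T -> R) : D' `<=` D -> (forall x, D x -> 0 <= a x) ->
  (\esum_(x in D') (a x)%:E <= \esum_(x in D) (a x)%:E)%E.
Proof.
move=> sub a0; rewrite [X in (_ <= X)%E]esum_mkcond [X in (X <= _)%E]esum_mkcond.
apply: le_esum => x _; case: ifPn => xD'.
  by rewrite ifT // inE; apply: sub; rewrite -inE.
case: ifPn => // xD; rewrite lee_fin a0 //; by rewrite -inE.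
Qed.

Lemma esum_sub D D' (a : T -> R) : D' `<=` D ->
  (forall x, D x -> ~ D' x -> a x = 0) ->
  (\esum_(x in D) (a x)%:E = \esum_(x in D') (a x)%:E)%E.
Proof.
move=> sub a0; rewrite esum_mkcond [RHS]esum_mkcond.
apply: eq_esum => x _; case: ifPn => xD; case: ifPn => xD' //.
- rewrite a0 //; first exact: set_mem.
  by move=> h; move/negP: xD'; apply; exact: mem_set.
- by exfalso; move/negP: xD; apply; apply: mem_set; apply: sub; exact: set_mem.
Qed.

Lemma rsum_sub D D' g : D' `<=` D -> (forall x, D x -> ~ D' x -> g x = 0) ->
  rsum D g = rsum D' g.
Proof.
move=> sub g0; rewrite /rsum (@esum_sub D D') // ?(@esum_sub D D' (fun x => Num.max (- g x) 0)) //.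
- by move=> x Dx nD; rewrite g0 // oppr0 maxxx.
- by move=> x Dx nD; rewrite g0 // maxxx.
Qed.

Lemma sm_sub D D' g : D' `<=` D -> sm D g -> sm D' g.
Proof.
move=> sub; apply: le_lt_trans; apply: esum_le_sub => // x _; exact: normr_ge0.
Qed.

End Tool.

Section Prod.
Context {R : realType} {X : choiceType}.
Local Set Implicit Arguments.
Local Unset Strict Implicit.

Definition sw (z : X * X) : X * X := (z.2, z.1).

Lemma esum_swap (U : set X) (a : X * X -> \bar R) :
  (\esum_(z in U `*` U) a (sw z) = \esum_(z in U `*` U) a z)%E.
Proof.
rewrite -(@esum_image R _ _ (U `*` U) sw a).
  congr esum; apply/seteqP; split.
    by move=> z [[x y] [/= Ux Uy] <-]; split.
  by move=> [x y] [/= Ux Uy]; exists (y, x).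
by move=> [x y] [x' y'] _ _ [-> ->].
Qed.

Lemma rsum_swap (U : set X) (g : X * X -> R) :
  rsum (U `*` U) (fun z => g (sw z)) = rsum (U `*` U) g.
Proof.
rewrite /rsum (@esum_swap U (fun z => (Num.max (g z) 0)%:E)).
by rewrite (@esum_swap U (fun z => (Num.max (- g z) 0)%:E)).
Qed.

Lemma sm_swap (U : set X) (g : X * X -> R) :
  sm (U `*` U) g -> sm (U `*` U) (fun z => g (sw z)).
Proof. by rewrite /sm (@esum_swap U (fun z => (`|g z|)%:E)). Qed.

Lemma esum_XR (A B : set X) (a : X * X -> R) :
  (\esum_(z in A `*` B) (a z)%:E =
   \esum_(k in A `*`` (fun=> B)) (a (k.1, k.2))%:E)%E.
Proof. by apply: eq_esum => -[x y]. Qed.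

Lemma esum_fubini (A B : set X) (a : X * X -> R) : finite_set A ->
  (forall z, 0 <= a z) ->
  (\esum_(z in A `*` B) (a z)%:E =
    \sum_(x \in A) \esum_(y in B) (a (x, y))%:E)%E.
Proof.
move=> fA a0; rewrite esum_XR.
rewrite -(@esum_esum R X X A (fun _ => B) (fun x y => (a (x, y))%:E)); last first.
  by move=> i j _ _; rewrite lee_fin.
rewrite esum_fset //.
by move=> i _; apply: esum_ge0 => j _; rewrite lee_fin.
Qed.

Lemma esum_row (A B : set X) (a : X * X -> R) x : A x ->
  (forall z, 0 <= a z) ->
  (\esum_(y in B) (a (x, y))%:E <= \esum_(z in A `*` B) (a z)%:E)%E.
Proof.
move=> Ax a0; rewrite esum_XR.
rewrite -(@esum_esum R X X A (fun _ => B) (fun x y => (a (x, y))%:E)); last first.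
  by move=> i j _ _; rewrite lee_fin.
apply: esum_ge; exists [set x].
  by split; [exact: finite_set1 | move=> y ->].
by rewrite fsbig_set1.
Qed.

Lemma rsum_prod_ge0 (A B : set X) (g : X * X -> R) : finite_set A ->
  sm (A `*` B) g ->
  (forall x, A x -> sm B (fun y => g (x, y)) /\ 0 <= rsum B (fun y => g (x, y))) ->
  0 <= rsum (A `*` B) g.
Proof.
move=> fA sg rows; rewrite /rsum subr_ge0.
have fin (a : X * X -> R) : (forall z, 0 <= a z) ->
    (\esum_(z in A `*` B) (a z)%:E < +oo)%E ->
    (\esum_(z in A `*` B) (a z)%:E \is a fin_num).
  by move=> a0 af; rewrite ge0_fin_numE // esum_ge0 // => z _; rewrite lee_fin.
apply: fine_le.
- exact: (fin _ (fun z => maxp_ge0 (- g z)) (sm_neg sg)).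
- exact: (fin _ (fun z => maxp_ge0 (g z)) (sm_pos sg)).
rewrite (esum_fubini B fA (fun z => maxp_ge0 (g z))).
rewrite (esum_fubini B fA (fun z => maxp_ge0 (- g z))).
apply: lee_fsum => // x Ax.
have [sr] := rows x Ax; rewrite /rsum subr_ge0 => r0.
have := @esum_fin R X B (fun y => Num.max (g (x, y)) 0) (fun y _ => maxp_ge0 _) (sm_pos sr).
move=> /= ->.
have := @esum_fin R X B (fun y => Num.max (- g (x, y)) 0) (fun y _ => maxp_ge0 _) (sm_neg sr).
by move=> /= ->; rewrite lee_fin.
Qed.

End Prod.

Section Spow.
Context {R : realType}.
Variable p : R.
Hypothesis p1 : 1 < p.

Lemma spowN (a : R) : spow p (- a) = - spow p a.
Proof. by rewrite /spow normrN mulrN. Qed.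

Lemma spow_ge0E (a : R) : 0 <= a -> spow p a = a `^ (p - 1).
Proof.
move=> a0; rewrite /spow ger0_norm //.
have e : p - 2 + 1 = p - 1 by lra.
have e1 : (p - 1 == 0) = false by apply/negbTE; rewrite subr_eq0 gt_eqF.
by rewrite -{2}(powRr1 a0) -powRD e // e1.
Qed.

Lemma norm_spow (a : R) : `|spow p a| = `|a| `^ (p - 1).
Proof.
rewrite /spow normrM ger0_norm ?powR_ge0 //.
have e : p - 2 + 1 = p - 1 by lra.
have e1 : (p - 1 == 0) = false by apply/negbTE; rewrite subr_eq0 gt_eqF.
by rewrite -{2}(powRr1 (normr_ge0 a)) -powRD e // e1.
Qed.

Lemma spow_sign (a : R) : 0 < a -> 0 < spow p a.
Proof. by move=> a0; rewrite spow_ge0E ?ltW // powR_gt0. Qed.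

Lemma spow_ltnn (a c : R) : 0 <= a -> a < c -> spow p a < spow p c.
Proof.
move=> a0 ac; rewrite !spow_ge0E // ?(le_trans a0 (ltW ac)) //.
apply: gt0_ltr_powR => //; first by rewrite subr_gt0.
by rewrite nnegrE; apply: le_trans a0 (ltW ac).
Qed.

Lemma spow_lt (a c : R) : a < c -> spow p a < spow p c.
Proof.
move=> ac; have [a0|a0] := leP 0 a; first exact: spow_ltnn.
have [c0|c0] := leP 0 c.
  have h1 : spow p a < 0.
    by rewrite -(opprK a) spowN oppr_lt0 spow_sign // oppr_gt0.
  have h2 : 0 <= spow p c by rewrite spow_ge0E // powR_ge0.
  lra.
have h : spow p (- c) < spow p (- a) by apply: spow_ltnn; rewrite ?oppr_ge0 ?ltrN2 ?ltW.
by rewrite !spowN ltrN2 in h.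
Qed.

Lemma spow_le (a c : R) : a <= c -> spow p a <= spow p c.
Proof.
by rewrite le_eqVlt => /orP[/eqP ->|/spow_lt/ltW].
Qed.

End Spow.

Section G.
Context {R : realType} {X : choiceType}.
Local Set Implicit Arguments.
Local Unset Strict Implicit.

Lemma pow_bound (p t : R) : 1 < p -> 0 <= t -> t `^ (p - 1) <= 1 + t `^ p.
Proof.
move=> p1 t0; have [t1|t1] := leP t 1.
  have : t `^ (p - 1) <= 1 `^ (p - 1).
    apply: ge0_ler_powR => //; first by rewrite subr_ge0 ltW.
    by rewrite nnegrE.
  rewrite powR1 /= => h; have := powR_ge0 t p; lra.
have e : p = (p - 1) + 1 by ring.
have e1 : (p - 1 + 1 == 0) = false by apply/negbTE; rewrite -e gt_eqF // (lt_trans _ p1).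
have E : t `^ (p - 1 + 1) = t `^ (p - 1) * t `^ 1 by rewrite powRD ?e1.
rewrite -e powRr1 ?(le_trans t0) // in E; rewrite E.
have : 0 <= t `^ (p - 1) by apply: powR_ge0.
nra.
Qed.

Lemma rowfin (b : X -> X -> R) (p : R) (U : set X) (h : X -> R) x :
  (forall x y, 0 <= b x y) ->
  (forall x, (\esum_(y in [set: X]) (b x y)%:E < +oo)%E) -> 1 < p ->
  Dp b p U h -> U x ->
  (\esum_(y in U) (b x y * `|h x - h y| `^ (p - 1))%:E < +oo)%E.
Proof.
move=> b0 bfin p1 Dh Ux.
apply: (@esum_le_fin R X U _ (fun y => b x y + b x y * `|h x - h y| `^ p)).
  move=> y _; apply/andP; split; first by rewrite mulr_ge0 ?powR_ge0.
  have := pow_bound p1 (normr_ge0 (h x - h y)); have := b0 x y; nra.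
under eq_esum do rewrite EFinD.
rewrite esumD; last 2 first.
  by move=> y _; rewrite lee_fin.
  by move=> y _; rewrite lee_fin mulr_ge0 ?powR_ge0.
apply: lte_add_pinfty.
  apply: le_lt_trans (bfin x); apply: esum_le_sub => // y _.
apply: le_lt_trans Dh.
apply: (@esum_row R X U U (fun z => b z.1 z.2 * `|h z.1 - h z.2| `^ p) x Ux).
by move=> z; rewrite mulr_ge0 ?powR_ge0.
Qed.

Lemma smG (W U : set X) (K : X * X -> R) (f : X -> R) :
  finite_set W -> W `<=` U -> (forall x, 0 <= f x) ->
  (forall x, U x -> ~ W x -> f x = 0) ->
  (forall x, W x -> (\esum_(y in U) (`|K (x, y)|)%:E < +oo)%E) ->
  sm (U `*` U) (fun z => K z * f z.1).
Proof.
move=> fW WU f0 fz Krow; rewrite /sm.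
rewrite (@esum_sub R _ (U `*` U) (W `*` U)); last first.
- move=> [x y] [/= Ux Uy] nW; rewrite fz ?mulr0 ?normr0 //.
  by move=> Wx; apply: nW.
- by move=> [x y] [/= Wx Uy]; split => //; exact: WU.
rewrite (@esum_fubini R X W U (fun z => `|K z * f z.1|)) //.
rewrite fsbig_finite //= big_seq; apply: lte_sum_pinfty => x.
rewrite in_fset_set // inE => Wx.
under eq_esum do rewrite normrM (ger0_norm (f0 x)).
rewrite esumZr //.
have := @esum_fin R X U (fun y => `|K (x, y)|) (fun y _ => normr_ge0 _) (Krow x Wx).
by move=> /= ->; rewrite -EFinM ltry.
Qed.

End G.

Lemma minf (R : realType) (a c : R) : Num.min a c - a = - Num.max (a - c) 0.
Proof. rewrite /Num.min /Num.max; case: ltP => h1; case: ltP => h2; lra. Qed.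

Lemma Tge0 (R : realType) (p bb a1 a2 c1 c2 : R) : 1 < p -> 0 <= bb ->
  0 <= bb * (spow p (a1 - a2) - spow p (c1 - c2)) *
       (Num.max (a1 - c1) 0 - Num.max (a2 - c2) 0).
Proof.
move=> p1 b0; have [h|h] := leP (c1 - c2) (a1 - a2).
  have := @spow_le R p p1 _ _ h => s.
  apply: mulr_ge0; first by apply: mulr_ge0 => //; lra.
  rewrite /Num.max; case: ltP => h1; case: ltP => h2; lra.
have := @spow_lt R p p1 _ _ h => s.
apply: mulr_le0; first by apply: mulr_ge0_le0 => //; lra.
rewrite /Num.max; case: ltP => h1; case: ltP => h2; lra.
Qed.

Theorem lemma3p26 (R : realType) (X : choiceType) (b : X -> X -> R)
  (m c : X -> R) (p : R) (W : set X) (psi theta u v : X -> R) :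
  weighted_graph b m c -> (forall x, c x = 0) -> 1 < p -> finite_set W ->
  obstacle_solution b p psi theta W u ->
  (Fp b p (closureW b W) v \/ Dp b p (closureW b W) v) ->
  (forall x, W x -> 0 <= Delta_p b m p v x) ->
  Kset b p psi theta W (fun x => Num.min (u x) (v x)) ->
  forall x, W x -> u x <= v x.
Proof.
move=> [cntX [infX [bsym [b0 [bdiag [bfin [m0 [c0' conn]]]]]]]] c0 p1 fW.
move=> [[Dpu psiu bdu] obs] Hv Dv Kw.
have [Dpw psiw bdw] := Kw.
set U := closureW b W.
pose f x := Num.max (u x - v x) 0.
have f0 x : 0 <= f x by exact: maxp_ge0.
have WU : W `<=` U by move=> x Wx; left.
have fz x : U x -> ~ W x -> f x = 0.
  case=> [Wx nW|xb nW]; first by case: (nW Wx).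
  have := bdu x xb; have := bdw x xb => /= e1 e2.
  have uv : u x <= v x by move: e2; rewrite -e1 /Num.min; case: ltP => h; lra.
  by rewrite /f; apply/max_idPr; rewrite subr_le0.
have nbr x y : W x -> ~ U y -> b x y = 0.
  move=> Wx nU; apply/eqP; rewrite eq_le b0 andbT leNgt; apply/negP => bp.
  apply: (nU); right; split; first by move=> Wy; apply: nU; left.
  by exists x; rewrite bsym.
pose P (z : X * X) := b z.1 z.2 * spow p (u z.1 - u z.2).
pose Q (z : X * X) := b z.1 z.2 * spow p (v z.1 - v z.2).
pose GP z := P z * f z.1.
pose GQ z := Q z * f z.1.
have normK (h : X -> R) x y : `|b x y * spow p (h x - h y)| = b x y * `|h x - h y| `^ (p - 1).
  by rewrite normrM ger0_norm // (@norm_spow R p p1).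
have smGP : sm (U `*` U) GP.
  apply: (@smG R X W U P f) => // x Wx; rewrite /P /=.
  under eq_esum do rewrite normK.
  by apply: rowfin => //; apply: WU.
have rowQ x : W x -> (\esum_(y in U) (b x y * `|v x - v y| `^ (p - 1))%:E < +oo)%E.
  move=> Wx; case: Hv => [Fv|Dpv]; last by apply: rowfin => //; apply: WU.
  apply: le_lt_trans (Fv x (WU x Wx)); apply: esum_le_sub => // y _.
  by rewrite mulr_ge0 ?powR_ge0.
have smGQ : sm (U `*` U) GQ.
  apply: (@smG R X W U Q f) => // x Wx; rewrite /Q /=.
  under eq_esum do rewrite normK.
  exact: rowQ.
have Psw z : P (sw z) = - P z by rewrite /P /sw /= bsym -opprB spowN mulrN.
have Qsw z : Q (sw z) = - Q z by rewrite /Q /sw /= bsym -opprB spowN mulrN.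
have GPs z : GP z + GP (sw z) = P z * (f z.1 - f z.2).
  by rewrite /GP Psw /sw /=; ring.
have GQs z : GQ z + GQ (sw z) = Q z * (f z.1 - f z.2).
  by rewrite /GQ Qsw /sw /=; ring.
have hP : rsum (U `*` U) (fun z => GP z + GP (sw z)) <= 0.
  have hob := obs _ Kw; move: hob; rewrite /energy.
  rewrite (@rsum_eq _ _ _ _ (fun z => - (GP z + GP (sw z)))); last first.
    by move=> z _; rewrite GPs /P /f !minf; ring.
  rewrite rsumN pmulr_rge0 ?invr_gt0 //; lra.
have smQrow x : W x -> sm U (fun y => Q (x, y)).
  move=> Wx; rewrite /sm /Q /=.
  under eq_esum do rewrite normK.
  exact: rowQ.
have green : 0 <= rsum (U `*` U) GQ.
  rewrite (@rsum_sub _ _ (U `*` U) (W `*` U)); last first.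
  - move=> [x y] [/= Ux Uy] nW; rewrite /GQ /= fz ?mulr0 //.
    by move=> Wx; apply: nW.
  - by move=> [x y] [/= Wx Uy]; split => //; exact: WU.
  apply: rsum_prod_ge0 => //.
    by apply: (@sm_sub _ _ (U `*` U)) => // -[x y] [/= Wx Uy]; split => //; exact: WU.
  move=> x Wx; split; first exact: (smZr (f0 x) (smQrow x Wx)).
  rewrite (rsumZr (f0 x) (smQrow x Wx)); apply: mulr_ge0 => //.
  rewrite -(@rsum_sub _ _ [set: X] U) //; last first.
    by move=> y _ nU; rewrite /Q /= nbr // mul0r.
  have := Dv x Wx; rewrite /Delta_p pmulr_rge0 ?invr_gt0 //.
have hQ : 0 <= rsum (U `*` U) (fun z => GQ z + GQ (sw z)).
  rewrite rsumD //; last exact: sm_swap.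
  rewrite (@rsum_swap R X U GQ); lra.
pose T z := (GP z + GP (sw z)) - (GQ z + GQ (sw z)).
have TE z : T z = b z.1 z.2 * (spow p (u z.1 - u z.2) - spow p (v z.1 - v z.2)) *
    (f z.1 - f z.2).
  by rewrite /T GPs GQs /P /Q; ring.
have smT : sm (U `*` U) T.
  by apply: smB; apply: smD => //; apply: sm_swap.
have T0 : forall z, (U `*` U) z -> T z = 0.
  apply: rsum_zero => //.
    by move=> z _; rewrite TE; apply: Tge0.
  rewrite rsumB; try by apply: smD => //; apply: sm_swap.
  lra.
move=> x0 Wx0; rewrite leNgt; apply/negP => vu.
have [y0 ny0] : exists y, ~ W y.
  case: (pselect (exists y, ~ W y)) => // h; exfalso; apply: infX.
  apply: (sub_finite_set _ fW) => y _.
  by case: (pselect (W y)) => // ny; exfalso; apply: h; exists y.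
have [n [s [s0 [sn sb]]]] := conn x0 y0.
have key i : (i <= n)%N -> W (s i) /\ v (s i) < u (s i).
  elim: i => [_|i IH Hi]; first by rewrite s0.
  have [Wi vi] := IH (ltnW Hi).
  have bp := sb i Hi.
  have Ui1 : U (s i.+1).
    case: (pselect (W (s i.+1))) => h; first by left.
    by right; split => //; exists (s i); split => //; rewrite bsym.
  have [lt|ge] := ltP (v (s i.+1)) (u (s i.+1)).
    split => //; case: (pselect (W (s i.+1))) => // h; exfalso.
    have := fz _ Ui1 h; rewrite /f /Num.max; case: ltP => h1 h2; lra.
  exfalso; have := T0 (s i, s i.+1) (conj (WU _ Wi) Ui1); rewrite TE /=.
  have fi : f (s i) = u (s i) - v (s i).
    by rewrite /f; apply/max_idPl; rewrite subr_ge0 ltW.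
  have fi1 : f (s i.+1) = 0.
    by rewrite /f; apply/max_idPr; rewrite subr_le0.
  have sp : spow p (v (s i) - v (s i.+1)) < spow p (u (s i) - u (s i.+1)).
    by apply: (@spow_lt R p p1); lra.
  rewrite fi fi1 => /eqP; rewrite gt_eqF //.
  by apply: mulr_gt0; [apply: mulr_gt0 => //; rewrite subr_gt0 | lra].
have := key n (leqnn n); rewrite sn => -[Wy _]; exact: ny0 Wy.
Qed.
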